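(* For $0<h\le i\le n$ and any pair $(d,p)\in DP_i$: if $dp(h,i)>(d,p)$, then $dp(h-1,i)\ge(d,p)$.
   Context: Let $x_0\le x_1\le\cdots\le x_{n+1}$ be real numbers, $\{x\}=x-\lfloor x\rfloor$, and let $\pi=(\pi_0,\dots,\pi_{n+1})$ be the permutation of $\{0,\dots,n+1\}$ such that for $0\le i<j\le n+1$, $\pi_i>\pi_j$ iff $(\{x_i\},-x_i,i)<(\{x_j\},-x_j,j)$ lexicographically. For a sequence of indices $s_0<\cdots<s_k$, a drop is a consecutive pair $(s_{h-1},s_h)$ with $\pi_{s_{h-1}}>\pi_{s_h}$. For $0\le h\le i\le n$, $dp(h,i)$ is the pair $(d(h,i),p(h,i))$, where $d(h,i)$ is the minimum number of drops over all sequences of $h+1$ indices $0=s_0<s_1<\cdots<s_h\le i$, and $p(h,i)$ is the minimum of $\pi_{s_h}$ over all such sequences having exactly $d(h,i)$ drops. Let $DP_i=\{dp(h,i)\mid 0\le h\le i\}$. Pairs are compared lexicographically. *)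

(* Defs.v *)
From HB Require Import structures.
From mathcomp Require Import all_boot all_order all_algebra fingroup perm.
From mathcomp Require Import reals.
Set Implicit Arguments. Unset Strict Implicit. Unset Printing Implicit Defensive.
Import Order.TTheory GRing.Theory Num.Theory.
Local Open Scope ring_scope.

Definition frac (R : realType) (x : R) : R := (x - (Num.floor x)%:~R)%R.

(* key_i = ({x_i}, -x_i, i); keylt x i j <=> key_i < key_j lexicographically *)
Definition keylt (R : realType) (x : nat -> R) (i j : nat) : bool :=
  ((frac (x i) < frac (x j))%R) ||
  ((frac (x i) == frac (x j)) &&
   (((- x i < - x j)%R) || ((- x i == - x j) && (i < j)%N))).

Definition is_pi (R : realType) (n : nat) (x : nat -> R) (pi : {perm 'I_n.+2}) : Prop :=
  forall i j : 'I_n.+2, (i < j)%N -> ((pi j < pi i)%N = keylt x i j).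

Definition drops (n : nat) (pi : {perm 'I_n.+2}) (s : seq 'I_n.+2) : nat :=
  count (fun pr : 'I_n.+2 * 'I_n.+2 => (pi pr.2 < pi pr.1)%N) (zip s (behead s)).

Definition valid_seq (n h i : nat) (t : h.+1.-tuple 'I_n.+2) : bool :=
  [&& val (tnth t ord0) == 0%N, sorted ltn (map val t) & all (fun j : 'I_n.+2 => (val j <= i)%N) t].

(* d(h,i): minimum number of drops (the default n+2 is only used when there is no
   valid sequence, i.e. h > i, which never happens for 0 <= h <= i) *)
Definition dd (n : nat) (pi : {perm 'I_n.+2}) (h i : nat) : nat :=
  \big[minn/n.+2]_(t : h.+1.-tuple 'I_n.+2 | valid_seq i t) drops pi t.

Definition pp (n : nat) (pi : {perm 'I_n.+2}) (h i : nat) : nat :=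
  \big[minn/n.+2]_(t : h.+1.-tuple 'I_n.+2 |
      valid_seq i t && (drops pi t == dd pi h i)) val (pi (tnth t ord_max)).

Definition dp (n : nat) (pi : {perm 'I_n.+2}) (h i : nat) : nat * nat :=
  (dd pi h i, pp pi h i).

Definition lexlt (a b : nat * nat) : bool :=
  (a.1 < b.1)%N || ((a.1 == b.1) && (a.2 < b.2)%N).
Definition lexle (a b : nat * nat) : bool :=
  (a.1 < b.1)%N || ((a.1 == b.1) && (a.2 <= b.2)%N).

Definition inDP (n : nat) (pi : {perm 'I_n.+2}) (i : nat) (q : nat * nat) : Prop :=
  exists2 h, (h <= i)%N & dp pi h i = q.

(* Main.v *)
Require Import Defs.
From HB Require Import structures.
From mathcomp Require Import all_boot all_order all_algebra fingroup perm.
From mathcomp Require Import reals.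
From mathcomp Require Import zify.
Set Implicit Arguments. Unset Strict Implicit. Unset Printing Implicit Defensive.

Lemma bm_le (T : finType) (P : pred T) (F : T -> nat) c t :
  P t -> (\big[minn/c]_(u | P u) F u <= F t)%N.
Proof.
move=> Pt; move: (mem_index_enum t); elim: (index_enum T) => [|a s IH] //.
rewrite inE big_cons => /orP [/eqP <-|ts].
  by rewrite Pt geq_minl.
case: (P a); last exact: IH.
by rewrite geq_min IH ?orbT.
Qed.

Lemma bm_lec (T : finType) (P : pred T) (F : T -> nat) c :
  (\big[minn/c]_(u | P u) F u <= c)%N.
Proof. by elim/big_rec: _ => // j r _ H; rewrite geq_min H orbT. Qed.

Lemma bm_ex (T : finType) (P : pred T) (F : T -> nat) c :
  \big[minn/c]_(u | P u) F u = c \/ exists2 t, P t & \big[minn/c]_(u | P u) F u = F t.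
Proof.
elim/big_rec: _ => [|j r Pj H]; first by left.
case: (leqP (F j) r) => Hl.
  by right; exists j.
exact: H.
Qed.

Section D.
Variables (n : nat) (pi : {perm 'I_n.+2}).

Lemma drops_cons a s : drops pi (a :: s) =
  ((if s is b :: _ then (pi b < pi a)%N else false) : nat) + drops pi s.
Proof. by case: s. Qed.

Lemma drops_rcons a u y : drops pi (rcons (a :: u) y) =
  drops pi (a :: u) + (pi y < pi (last a u))%N.
Proof.
elim: u a => [|b u IH] a; first by rewrite /drops /= addn0.
by rewrite rcons_cons drops_cons IH [drops pi (a :: _)]drops_cons /= addnA.
Qed.

Lemma tnth_max (T : Type) m (t : m.+1.-tuple T) x0 : tnth t ord_max = last x0 t.
Proof. by rewrite (tnth_nth x0) -nth_last size_tuple. Qed.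

Lemma key k i (t : k.+2.-tuple 'I_n.+2) : valid_seq i t ->
  exists t' : k.+1.-tuple 'I_n.+2, valid_seq i t' /\
   ((drops pi t' < drops pi t)%N \/
    (drops pi t' = drops pi t /\ (pi (tnth t' ord_max) <= pi (tnth t ord_max))%N)).
Proof.
move=> vt.
set x := thead t.
have Es : tval t = x :: behead t by rewrite {1}(tuple_eta t).
case Eb : (behead t) => [|b s'].
  by move: (size_behead t); rewrite Eb size_tuple.
pose t' := belast_tuple x (behead_tuple t).
have Et' : tval t' = x :: belast b s' by rewrite /= Eb.
have Et : tval t = rcons (x :: belast b s') (last b s').
  by rewrite Es Eb /= -lastI.
have Lt : tnth t ord_max = last b s' by rewrite (tnth_max _ x) Et last_rcons.
have Lt' : tnth t' ord_max = last x (belast b s') by rewrite (tnth_max _ x) Et'.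
have F0 : tnth t' ord0 = tnth t ord0.
  by rewrite (tnth_nth x) (tnth_nth x) Et' Es.
exists t'; split.
  move: vt; rewrite /valid_seq F0 => /and3P [-> so al].
  apply/and3P; split => //.
    apply: (subseq_sorted ltn_trans _ so); apply: map_subseq.
    by rewrite Et Et'; apply: subseq_rcons.
  by move: al; rewrite Et Et' all_rcons => /andP [].
rewrite Et Et' drops_rcons Lt Lt'.
case H: (pi (last b s') < pi (last x (belast b s')))%N.
  by left; rewrite addn1 ltnSn.
by right; rewrite addn0; split => //; rewrite leqNgt H.
Qed.

Lemma mono k i : lexle (dp pi k i) (dp pi k.+1 i).
Proof.
rewrite /lexle /dp /=.
have ddk : (dd pi k i <= n.+2)%N by apply: bm_lec.
have ppk : (pp pi k i <= n.+2)%N by apply: bm_lec.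
have ddle : forall t : k.+2.-tuple 'I_n.+2, valid_seq i t -> (dd pi k i <= drops pi t)%N.
  move=> t vt; have [t' [vt' H]] := key vt.
  apply: (leq_trans (@bm_le _ (valid_seq i) (fun u : k.+1.-tuple 'I_n.+2 => drops pi u) n.+2 t' vt')).
  by case: H => [/ltnW|[-> _]].
case: (bm_ex (fun u : k.+2.-tuple 'I_n.+2 => valid_seq i u && (drops pi u == dd pi k.+1 i))
   (fun t => val (pi (tnth t ord_max))) n.+2) => [Q|[t /andP [vt /eqP Dt] Q]];
  rewrite /pp in Q *; rewrite Q.
  have : (dd pi k i <= dd pi k.+1 i)%N.
    case: (bm_ex (valid_seq i) (fun u : k.+2.-tuple 'I_n.+2 => drops pi u) n.+2)
      => [D|[t vt D]]; rewrite /dd in D *; rewrite D //.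
    exact: ddle.
  rewrite leq_eqVlt => /orP [/eqP ->|->]; rewrite ?orbT // eqxx ltnn /=; apply: bm_lec.
have [t' [vt' H]] := key vt.
rewrite Dt in H.
case: H => [H|[E H]].
  by rewrite (leq_ltn_trans (@bm_le _ (valid_seq i) (fun u : k.+1.-tuple 'I_n.+2 => drops pi u) n.+2 t' vt') H).
have : (dd pi k i <= dd pi k.+1 i)%N.
  by rewrite -E; apply: (@bm_le _ (valid_seq i) (fun u : k.+1.-tuple 'I_n.+2 => drops pi u) n.+2 t' vt').
rewrite leq_eqVlt => /orP [/eqP Ek|->] //.
rewrite Ek ltnn eqxx /=.
apply: leq_trans H.
apply: (bm_le (fun u : k.+1.-tuple 'I_n.+2 => val (pi (tnth u ord_max))) n.+2).
by rewrite vt' /= E.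
Qed.

Lemma chain k m i : (k <= m)%N -> lexle (dp pi k i) (dp pi m i).
Proof.
elim: m => [|m IH]; first by rewrite leqn0 => /eqP ->; rewrite /lexle ltnn eqxx leqnn.
rewrite leq_eqVlt => /orP [/eqP ->|]; first by rewrite /lexle ltnn eqxx leqnn.
rewrite ltnS => /IH; move: (mono m i).
case: (dp pi m i) (dp pi m.+1 i) (dp pi k i) => [a b] [c e] [f g].
rewrite /lexle /=; lia.
Qed.

End D.

Theorem lemma9 (R : realType) (n : nat) (x : nat -> R)
  (hx : forall i j : nat, (i <= j)%N -> (j <= n.+1)%N -> (x i <= x j)%R)
  (pi : {perm 'I_n.+2}) (hpi : is_pi x pi)
  (h i : nat) (h0 : (0 < h)%N) (hi : (h <= i)%N) (iN : (i <= n)%N)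
  (d p : nat) (hdp : inDP pi i (d, p)) :
  lexlt (d, p) (dp pi h i) -> lexle (d, p) (dp pi h.-1 i).
Proof.
case: hdp => h' h'i E.
case: (leqP h h') => Hh.
  move: (chain pi i Hh); rewrite E.
  case: (dp pi h i) => a b; rewrite /lexle /lexlt /=; lia.
have Hh' : (h' <= h.-1)%N by case: h h0 hi Hh.
by move: (chain pi i Hh'); rewrite E.
Qed.
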